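(* Let $v$ be an aperiodic infinite word over $\{0,1\}$ such that $\Phi_{\mathbb{R}}(v)$ exists. Then for all but finitely many $\ell\ge1$, if $u$ denotes the prefix of $v$ of length $\ell$, the series $\Phi_{\mathbb{R}}(u^\infty)$ of the purely periodic word $u^\infty=uuu\cdots$ converges and $$\Phi_{\mathbb{R}}(u^\infty)=C_{\mathbb{R}}(u).$$
   Context: For an infinite $0$-$1$ word $w$ with $1$'s at positions $d_0<d_1<\cdots$, $\Phi_{\mathbb{R}}(w)=-\sum_{i\ge0}2^{d_i}/3^{i+1}$, said to exist if the series converges in $\mathbb{R}$. For a finite word $u$ of length $\ell\ge1$ and height $h$ with $1$'s at positions $d_0<\dots<d_{h-1}$, $\varphi(u)=\sum_{i=0}^{h-1}3^{h-1-i}2^{d_i}$ and $C_{\mathbb{R}}(u)=\varphi(u)/(2^\ell-3^h)$. *)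

(* Defs.v *)
From Stdlib Require Import Reals Lra Lia Arith List ClassicalEpsilon.
From Coquelicot Require Import Coquelicot.
Open Scope R_scope.

(* Infinite 0-1 words: true = 1, false = 0. *)
Definition word := nat -> bool.

Fixpoint cnt (w : word) (n : nat) : nat :=
  match n with
  | O => O
  | S m => (cnt w m + (if w m then 1 else 0))%nat
  end.

(* d is the position of the i-th 1 (0-indexed), i.e. d = d_i *)
Definition is_one_pos (w : word) (i d : nat) : Prop :=
  w d = true /\ cnt w d = i.

Definition one_pos (w : word) (i : nat) : option nat :=
  match excluded_middle_informative (exists d, is_one_pos w i d) with
  | left H => Some (proj1_sig (constructive_indefinite_description _ H))
  | right _ => None
  end.

(* i-th term 2^{d_i}/3^{i+1} of the series (0 when d_i does not exist) *)
Definition phi_term (w : word) (i : nat) : R :=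
  match one_pos w i with
  | Some d => 2 ^ d / 3 ^ (i + 1)
  | None => 0
  end.

Definition PhiR_exists (w : word) : Prop := ex_series (phi_term w).
Definition PhiR (w : word) : R := - Series (phi_term w).

Definition aperiodic (w : word) : Prop :=
  ~ exists p N : nat, (0 < p)%nat /\ forall n, (N <= n)%nat -> w (n + p)%nat = w n.

Definition fword := list bool.
Definition prefix (v : word) (l : nat) : fword := map v (seq 0 l).
(* u^infty = u u u ... (for u nonempty) *)
Definition pow_inf (u : fword) : word := fun n => nth (n mod length u) u false.
Definition fget (u : fword) (n : nat) : bool := nth n u false.
Definition height (u : fword) : nat := length (filter (fun b : bool => b) u).
(* varphi(u) = sum_{i<h} 3^{h-1-i} 2^{d_i}, written as a sum over the
   positions n < length u carrying a 1 (for such n, i = cnt n) *)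
Definition varphi (u : fword) : R :=
  fold_right Rplus 0
    (map (fun n => if fget u n
                   then 3 ^ (height u - 1 - cnt (fget u) n) * 2 ^ n
                   else 0)
         (seq 0 (length u))).
Definition CR (u : fword) : R := varphi u / (2 ^ length u - 3 ^ height u).

(* Main.v *)
Require Import Defs.
From Stdlib Require Import Reals Lra Lia Arith List ClassicalEpsilon Classical.
From Coquelicot Require Import Coquelicot.
Open Scope R_scope.

Lemma cnt_S w n : cnt w (S n) = (cnt w n + (if w n then 1 else 0))%nat.
Proof. reflexivity. Qed.

Lemma cnt_mono w m n : (m <= n)%nat -> (cnt w m <= cnt w n)%nat.
Proof. induction 1; auto. rewrite cnt_S; lia. Qed.

Lemma cnt_ext w w' n : (forall m, (m < n)%nat -> w m = w' m) -> cnt w n = cnt w' n.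
Proof.
  induction n; intros H; simpl; auto.
  rewrite IHn by (intros; apply H; lia). rewrite H by lia. reflexivity.
Qed.

Lemma is_one_pos_unique w i d d' : is_one_pos w i d -> is_one_pos w i d' -> d = d'.
Proof.
  intros [H1 H2] [H1' H2'].
  destruct (Nat.lt_total d d') as [Hl|[He|Hl]]; auto.
  - assert (Hm := cnt_mono w (S d) d' Hl). rewrite cnt_S, H1 in Hm. lia.
  - assert (Hm := cnt_mono w (S d') d Hl). rewrite cnt_S, H1' in Hm. lia.
Qed.

Lemma one_pos_Some w i d : is_one_pos w i d -> one_pos w i = Some d.
Proof.
  intros H. unfold one_pos.
  destruct excluded_middle_informative as [e|n].
  - f_equal. destruct (constructive_indefinite_description _ e) as [x Hx]. simpl.
    eapply is_one_pos_unique; eauto.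
  - exfalso; apply n; eauto.
Qed.

Lemma one_pos_Some_inv w i d : one_pos w i = Some d -> is_one_pos w i d.
Proof.
  unfold one_pos. destruct excluded_middle_informative as [e|n]; [|discriminate].
  destruct (constructive_indefinite_description _ e) as [x Hx]. simpl. congruence.
Qed.

Lemma phi_term_one w i d : is_one_pos w i d -> phi_term w i = 2 ^ d / 3 ^ (i + 1).
Proof. intros H. unfold phi_term. rewrite (one_pos_Some _ _ _ H). reflexivity. Qed.

Lemma phi_term_none w i : (forall d, ~ is_one_pos w i d) -> phi_term w i = 0.
Proof.
  intros H. unfold phi_term. destruct (one_pos w i) eqn:E; auto.
  exfalso. apply (H n). now apply one_pos_Some_inv.
Qed.

Lemma phi_term_ge0 w i : 0 <= phi_term w i.
Proof.
  unfold phi_term. destruct (one_pos w i); [|lra].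
  apply Rle_mult_inv_pos; [apply pow_le; lra | apply pow_lt; lra].
Qed.

Fixpoint psum (a : nat -> R) (n : nat) : R :=
  match n with O => 0 | S m => psum a m + a m end.

Lemma psum_sum_f a n : psum a (S n) = sum_f_R0 a n.
Proof. induction n; simpl in *; [lra|]. rewrite <- IHn. reflexivity. Qed.

Lemma psum_ext a b n : (forall m, (m < n)%nat -> a m = b m) -> psum a n = psum b n.
Proof. induction n; intros H; simpl; auto. rewrite IHn, H; auto; intros; apply H; lia. Qed.

Lemma psum_mono a m n : (forall i, 0 <= a i) -> (m <= n)%nat -> psum a m <= psum a n.
Proof. intros Ha. induction 1; [lra|]. simpl. specialize (Ha m0). lra. Qed.

Lemma psum_scal c a n : psum (fun i => c * a i) n = c * psum a n.
Proof. induction n; simpl; [ring|]. rewrite IHn; ring. Qed.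

Definition tw (w : word) (m : nat) : R :=
  if w m then 2 ^ m / 3 ^ (cnt w m + 1) else 0.

Lemma psum_tw w n : psum (tw w) n = psum (phi_term w) (cnt w n).
Proof.
  induction n; simpl; auto.
  unfold tw at 2. destruct (w n) eqn:E.
  - rewrite Nat.add_1_r. simpl psum at 2. rewrite IHn. f_equal.
    symmetry. rewrite <- Nat.add_1_r. apply phi_term_one. split; auto.
  - rewrite Nat.add_0_r. rewrite IHn. ring.
Qed.

Lemma geo_block (a : nat -> R) (h : nat) (r : R) :
  (1 <= h)%nat -> 0 <= r < 1 -> (forall i, 0 <= a i) ->
  (forall i, a (i + h)%nat = r * a i) ->
  ex_series a /\ Series a = psum a h / (1 - r).
Proof.
  intros Hh Hr Ha Hs.
  set (A := psum a h).
  assert (HA : 0 <= A) by (apply (psum_mono a 0 h Ha); lia).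
  assert (Hp : forall n, psum a (n + h) = A + r * psum a n).
  { induction n; simpl. unfold A; ring.
    rewrite IHn, Hs. ring. }
  assert (Hb : forall n, psum a n <= A / (1 - r)).
  { assert (HAr : A <= A / (1 - r)).
    { apply (Rmult_le_reg_r (1 - r)); [lra|]. unfold Rdiv. rewrite Rmult_assoc, Rinv_l by lra. nra. }
    intro n. induction n as [n IH] using lt_wf_ind.
    destruct (le_lt_dec h n) as [Hle|Hlt].
    - replace n with ((n - h) + h)%nat by lia. rewrite Hp.
      specialize (IH (n - h)%nat ltac:(lia)).
      apply Rle_trans with (A + r * (A / (1 - r))); [nra|].
      right. field. lra.
    - apply Rle_trans with A; auto. apply psum_mono; auto; lia. }
  assert (Hex : ex_series a).
  { assert (Hf : ex_finite_lim_seq (sum_n a)).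
    { apply ex_finite_lim_seq_incr with (A / (1 - r)).
      - intro n. rewrite sum_Sn. specialize (Ha (S n)). unfold plus; simpl. lra.
      - intro n. rewrite sum_n_Reals, <- psum_sum_f. apply Hb. }
    destruct Hf as [l Hl]. exists l. exact Hl. }
  split; auto.
  assert (E : Series a = A + r * Series a).
  { rewrite (Series_incr_n a h) at 1 by (auto; lia).
    rewrite <- (Series_scal_l r a). f_equal.
    - unfold A. destruct h; [lia|]. simpl Init.Nat.pred. now rewrite psum_sum_f.
    - apply Series_ext. intro n. rewrite Nat.add_comm. apply Hs. }
  apply (Rmult_eq_reg_r (1 - r)); [|lra].
  unfold Rdiv. rewrite Rmult_assoc, Rinv_l by lra. lra.
Qed.

Lemma pow_inf_per u n : (1 <= length u)%nat -> pow_inf u (n + length u)%nat = pow_inf u n.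
Proof.
  intros H. unfold pow_inf. replace (n + length u)%nat with (n + 1 * length u)%nat by lia.
  now rewrite Nat.Div0.mod_add.
Qed.

Lemma pow_inf_lt u m : (m < length u)%nat -> pow_inf u m = fget u m.
Proof. intros H. unfold pow_inf, fget. now rewrite Nat.mod_small. Qed.

Lemma cnt_per w p n : (forall m, w (m + p)%nat = w m) -> cnt w (n + p) = (cnt w n + cnt w p)%nat.
Proof.
  intros H. induction n; simpl; auto.
  rewrite IHn, H. lia.
Qed.

Lemma height_cnt u : height u = cnt (fget u) (length u).
Proof.
  induction u as [|b u IH] using rev_ind; auto.
  unfold height in *. rewrite filter_app, length_app, length_app. simpl length.
  rewrite Nat.add_1_r, cnt_S.
  rewrite (cnt_ext (fget (u ++ b :: nil)) (fget u)).
  2:{ intros m Hm. unfold fget. now rewrite app_nth1. }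
  rewrite <- IH. unfold fget. rewrite nth_middle. destruct b; simpl; rewrite ?length_app; simpl; lia.
Qed.

Lemma fold_map_seq (g : nat -> R) n : fold_right Rplus 0 (map g (seq 0 n)) = psum g n.
Proof.
  induction n; [reflexivity|].
  rewrite seq_S, map_app, fold_right_app. simpl.
  simpl psum. rewrite <- IHn. clear IHn. generalize (g n). 
  induction (map g (seq 0 n)); simpl; intros; [ring|]. rewrite IHl. ring.
Qed.

Lemma periodic_value u : (1 <= length u)%nat -> 2 ^ length u < 3 ^ height u ->
  PhiR_exists (pow_inf u) /\ PhiR (pow_inf u) = CR u.
Proof.
  intros Hl Hlt.
  set (w := pow_inf u). set (l := length u) in *. set (h := height u) in *.
  assert (Hw : forall m, (m < l)%nat -> w m = fget u m) by (intros; now apply pow_inf_lt).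
  assert (Hcw : forall m, (m <= l)%nat -> cnt w m = cnt (fget u) m).
  { intros m Hm. apply cnt_ext. intros; apply Hw; lia. }
  assert (Hh : cnt w l = h) by (rewrite Hcw by lia; unfold h; now rewrite height_cnt).
  assert (Hper : forall m, w (m + l)%nat = w m) by (intros; now apply pow_inf_per).
  assert (Hcp : forall n, cnt w (n + l) = (cnt w n + h)%nat) by (intros; rewrite cnt_per; auto).
  assert (H1h : (1 <= h)%nat).
  { destruct h; [|lia]. simpl in Hlt. exfalso.
    assert (1 <= 2 ^ l) by (apply pow_R1_Rle; lra).
    assert (2 ^ 1 <= 2 ^ l) by (apply Rle_pow; lra || lia). simpl in *; lra. }
  set (r := 2 ^ l / 3 ^ h).
  assert (H3 : 0 < 3 ^ h) by (apply pow_lt; lra).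
  assert (H2 : 0 < 2 ^ l) by (apply pow_lt; lra).
  assert (Hr : 0 <= r < 1).
  { unfold r. split. apply Rle_mult_inv_pos; lra.
    apply (Rmult_lt_reg_r (3 ^ h)); auto. unfold Rdiv. rewrite Rmult_assoc, Rinv_l; lra. }
  assert (Hs : forall i, phi_term w (i + h) = r * phi_term w i).
  { intro i. destruct (classic (exists d, is_one_pos w i d)) as [[d Hd]|Hn].
    - rewrite (phi_term_one _ _ _ Hd).
      rewrite (phi_term_one w (i + h) (d + l)).
      + unfold r. rewrite pow_add, pow_add, pow_add, pow_add. field.
        split; apply pow_nonzero; lra.
      + destruct Hd as [Hd1 Hd2]. split. now rewrite Hper. rewrite Hcp; lia.
    - rewrite phi_term_none. rewrite phi_term_none; [ring|]. intros d Hd; apply Hn; eauto.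
      intros d' [Hd1 Hd2].
      destruct (le_lt_dec l d') as [Hle|Hlt'].
      + apply Hn. exists (d' - l)%nat. 
        replace d' with ((d' - l) + l)%nat in Hd1, Hd2 by lia.
        rewrite Hper in Hd1. rewrite Hcp in Hd2. split; auto; lia.
      + assert (Hm := cnt_mono w (S d') l Hlt'). rewrite cnt_S, Hd1 in Hm. lia. }
  destruct (geo_block (phi_term w) h r H1h Hr (phi_term_ge0 w) Hs) as [Hex Hser].
  split; [exact Hex|].
  unfold PhiR. rewrite Hser.
  assert (HA : psum (phi_term w) h = psum (tw w) l) by (rewrite psum_tw, Hh; auto).
  assert (Hvp : varphi u = 3 ^ h * psum (tw w) l).
  { unfold varphi. rewrite fold_map_seq. fold l h. rewrite <- psum_scal.
    apply psum_ext. intros m Hm. unfold tw. rewrite <- Hw by auto.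
    rewrite <- Hcw by lia. destruct (w m) eqn:E; [|ring].
    assert (Hc : (cnt w m + 1 <= h)%nat).
    { assert (Hm' := cnt_mono w (S m) l Hm). rewrite cnt_S, E in Hm'. lia. }
    replace (3 ^ h) with (3 ^ (h - 1 - cnt w m) * 3 ^ (cnt w m + 1)).
    2:{ rewrite <- pow_add. f_equal. lia. }
    field. apply pow_nonzero; lra. }
  unfold CR. fold l h. rewrite Hvp, <- HA. unfold r. field.
  repeat split; try lra; try (apply pow_nonzero; lra).
Qed.

Lemma aper_ones v : aperiodic v -> forall N, exists m, (N <= m)%nat /\ v m = true.
Proof.
  intros Ha N. apply NNPP. intros Hn. apply Ha. exists 1%nat, N. split; [lia|].
  intros n Hn'. destruct (v n) eqn:E.
  - exfalso; apply Hn; eauto.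
  - destruct (v (n + 1)%nat) eqn:E'; auto. exfalso; apply Hn. exists (n+1)%nat; split; auto; lia.
Qed.

Lemma cnt_big v : aperiodic v -> forall i, exists n, (i < cnt v n)%nat.
Proof.
  intros Ha i. induction i.
  - destruct (aper_ones v Ha 0) as [m [_ Hm]]. exists (S m). rewrite cnt_S, Hm. lia.
  - destruct IHi as [n Hn]. destruct (aper_ones v Ha n) as [m [Hm1 Hm2]].
    exists (S m). rewrite cnt_S, Hm2. pose proof (cnt_mono v n m Hm1). lia.
Qed.

Lemma step_lemma v i n : (i < cnt v n)%nat -> exists k, (cnt v k <= i)%nat /\ (i < cnt v (S k))%nat.
Proof.
  induction n; simpl; intros H; [lia|].
  destruct (le_lt_dec (S i) (cnt v n)) as [H1|H1].
  - apply IHn; lia.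
  - exists n. split; [lia|]. simpl; lia.
Qed.

Lemma ones_exist v : aperiodic v -> forall i, exists d, is_one_pos v i d.
Proof.
  intros Ha i. destruct (cnt_big v Ha i) as [n Hn].
  destruct (step_lemma v i n Hn) as [k [Hk1 Hk2]].
  rewrite cnt_S in Hk2. exists k. destruct (v k) eqn:E; [split; auto; lia | lia].
Qed.

Lemma prefix_len v l : length (prefix v l) = l.
Proof. unfold prefix. now rewrite length_map, length_seq. Qed.

Lemma prefix_height v l : height (prefix v l) = cnt v l.
Proof.
  rewrite height_cnt, prefix_len. apply cnt_ext. intros m Hm.
  unfold fget, prefix. rewrite nth_indep with (d' := v 0%nat) by (rewrite length_map, length_seq; lia).
  rewrite map_nth, seq_nth; auto.
Qed.

Theorem lemma35 (v : word) :
  aperiodic v -> PhiR_exists v ->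
  exists L : nat, forall l : nat, (1 <= l)%nat -> (L <= l)%nat ->
    PhiR_exists (pow_inf (prefix v l)) /\
    PhiR (pow_inf (prefix v l)) = CR (prefix v l).
Proof.
  intros Ha He.
  pose proof (ex_series_lim_0 _ He) as Hl.
  apply is_lim_seq_spec in Hl.
  destruct (Hl (mkposreal (1/3) ltac:(lra))) as [N HN]. simpl in HN.
  destruct (ones_exist v Ha N) as [dN HdN].
  exists (S dN). intros l H1 HL.
  apply periodic_value; rewrite ?prefix_len, ?prefix_height; auto.
  set (h := cnt v l).
  assert (HhN : (N < h)%nat).
  { destruct HdN as [A B]. pose proof (cnt_mono v (S dN) l HL). rewrite cnt_S, A in H. unfold h; lia. }
  destruct (ones_exist v Ha h) as [dh Hdh].
  assert (Hdl : (l <= dh)%nat).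
  { destruct (le_lt_dec l dh) as [|Hlt]; auto. destruct Hdh as [A B].
    pose proof (cnt_mono v (S dh) l Hlt). rewrite cnt_S, A in H. unfold h in B. lia. }
  specialize (HN h ltac:(lia)). rewrite (phi_term_one _ _ _ Hdh) in HN.
  rewrite Rminus_0_r in HN.
  assert (H3 : 0 < 3 ^ h) by (apply pow_lt; lra).
  assert (H2 : 0 < 2 ^ dh) by (apply pow_lt; lra).
  rewrite Rabs_pos_eq in HN by (apply Rle_mult_inv_pos; [lra| apply pow_lt; lra]).
  rewrite pow_add in HN. simpl in HN.
  assert (2 ^ dh < 3 ^ h).
  { apply (Rmult_lt_reg_r (/ (3 ^ h * 3))). apply Rinv_0_lt_compat; lra.
    replace (3 ^ h * / (3 ^ h * 3)) with (1/3) by (field; lra). rewrite Rmult_1_r in HN. exact HN. }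
  apply Rle_lt_trans with (2 ^ dh); auto. apply Rle_pow; lra || lia.
Qed.
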